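(* Let $G$ be a graph with girth at least $5$ and $G\not\cong P_2$, and let $S\subseteq V(G)$ be an MLD-set of $G$. Then each $u\in S$ has at most one neighbor of degree $1$ in $V(G)\setminus S$; define $\overline u$ to be that neighbor if it exists and $\overline u=u$ otherwise. The set $\overline S=\{\overline u:u\in S\}$ is a doubly resolving set of $G$ with $|\overline S|=|S|$. Consequently, $\psi(G)\le\gamma_M(G)$.
   Context: All graphs are finite, simple, undirected and connected, with at least 2 vertices; $d(u,v)$ is the shortest-path distance; the girth is the length of a shortest cycle (infinite if acyclic). A set $S\subseteq V(G)$ is resolving if for all distinct $x,y\in V(G)$ there is $u\in S$ with $d(u,x)\ne d(u,y)$; dominating if every vertex not in $S$ has a neighbor in $S$. An MLD-set is a set both resolving and dominating; $\gamma_M(G)$ is its minimum size. Two vertices $u,v$ doubly resolve a pair $\{x,y\}$ if $d(u,x)-d(u,y)\ne d(v,x)-d(v,y)$. A set $S$ is a doubly resolving set if every pair of distinct vertices of $G$ is doubly resolved by two vertices of $S$; $\psi(G)$ is the minimum size of a doubly resolving set. *)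

(* Defs.v *)
From HB Require Import structures.
From mathcomp Require Import all_boot all_order all_algebra.
Set Implicit Arguments. Unset Strict Implicit. Unset Printing Implicit Defensive.

Section GraphDefs.
Variable T : finType.
Variable e : rel T.

Definition walk_len (x y : T) (n : nat) : bool :=
  [exists p : n.-tuple T, path e x p && (last x p == y)].

(* shortest-path distance: least n with a walk of length n (for a connected
   graph a shortest walk has length < #|T|) *)
Definition dist (x y : T) : nat := find (walk_len x y) (iota 0 #|T|).

Definition deg (x : T) : nat := #|[set z | e x z]|.

Definition has_cycle_len (k : nat) : Prop :=
  exists s : seq T, [/\ size s = k, 3 <= k, uniq s & cycle e s].

Definition girth_ge5 : Prop := forall k, k < 5 -> ~ has_cycle_len k.

Definition iso_P2 : Prop :=
  exists x y : T, [/\ x != y, e x y & forall z, z = x \/ z = y].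

Definition resolving (S : {set T}) : bool :=
  [forall x, forall y, (x != y) ==> [exists u in S, dist u x != dist u y]].

Definition dominating (S : {set T}) : bool :=
  [forall x, (x \notin S) ==> [exists u in S, e x u]].

Definition mld_set (S : {set T}) : bool := resolving S && dominating S.

Definition doubly_resolves (u v x y : T) : bool :=
  ((dist u x)%:Z - (dist u y)%:Z != (dist v x)%:Z - (dist v y)%:Z)%R.

Definition doubly_resolving (S : {set T}) : bool :=
  [forall x, forall y, (x != y) ==>
     [exists u in S, exists v in S, doubly_resolves u v x y]].

(* minimum sizes (the whole vertex set is both an MLD-set and a doubly
   resolving set, so these minima are over nonempty families) *)
Definition gamma_M : nat :=
  #|[arg min_(S < [set: T] | mld_set S) #|S|]|.

Definition psi : nat :=
  #|[arg min_(S < [set: T] | doubly_resolving S) #|S|]|.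

End GraphDefs.

(* Main.v *)
Require Import Defs.
From HB Require Import structures.
From mathcomp Require Import all_boot all_order all_algebra.
From mathcomp Require Import zify.
Set Implicit Arguments. Unset Strict Implicit. Unset Printing Implicit Defensive.

Lemma walk0 (T : finType) (e : rel T) x y : walk_len e x y 0 = (x == y).
Proof.
apply/existsP/eqP => [[t]|->]; first by rewrite tuple0 /= => /eqP.
by exists [tuple]; rewrite /= eqxx.
Qed.

Lemma walkS (T : finType) (e : rel T) x y n :
  walk_len e x y n.+1 = [exists z, e x z && walk_len e z y n].
Proof.
apply/existsP/existsP => [[t]|[z /andP[exz /existsP[t Ht]]]].
  case/tupleP: t => z t /= /andP[/andP[exz pt] lt].
  by exists z; rewrite exz; apply/existsP; exists t; rewrite pt.
by exists [tuple of z :: t]; rewrite /= exz.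
Qed.

Lemma walk_cat (T : finType) (e : rel T) x y z m n :
  walk_len e x y m -> walk_len e y z n -> walk_len e x z (m + n).
Proof.
elim: m x => [|m IH] x; first by rewrite walk0 => /eqP ->.
rewrite walkS => /existsP[w /andP[exw Hw]] Hyz.
by rewrite addSn walkS; apply/existsP; exists w; rewrite exw (IH _ Hw Hyz).
Qed.

Lemma walk1 (T : finType) (e : rel T) x y : walk_len e x y 1 = e x y.
Proof.
rewrite walkS; apply/idP/idP => [/existsP[z /andP[exz]]|exy]; first by rewrite walk0 => /eqP <-.
by apply/existsP; exists y; rewrite exy walk0 eqxx.
Qed.

Lemma walk_sym (T : finType) (e : rel T) (e_sym : symmetric e) x y n :
  walk_len e x y n -> walk_len e y x n.
Proof.
elim: n x => [|n IH] x; first by rewrite !walk0 eq_sym.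
rewrite walkS => /existsP[z /andP[exz /IH Hyz]].
by rewrite -addn1; apply: walk_cat Hyz _; rewrite walk1 e_sym.
Qed.

Lemma walk_ex (T : finType) (e : rel T) x y : connect e x y ->
  exists2 n, n < #|T| & walk_len e x y n.
Proof.
case/connectP => p pp ->; case: (shortenP pp) => p' pp' up' _.
exists (size p'); last by apply/existsP; exists (in_tuple p'); rewrite /= pp' eqxx.
have := max_card (mem (x :: p')); move/card_uniqP: up' => -> /=; by [].
Qed.

Lemma dist_spec (T : finType) (e : rel T) (e_conn : forall x y : T, connect e x y) x y :
  dist e x y < #|T| /\ walk_len e x y (dist e x y).
Proof.
have [n ltn Hn] := walk_ex (e_conn x y).
have hs : has (walk_len e x y) (iota 0 #|T|).
  by apply/hasP; exists n => //; rewrite mem_iota.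
have hlt : dist e x y < #|T| by have := hs; rewrite has_find size_iota.
split => //; have := nth_find 0 hs; rewrite nth_iota // add0n.
Qed.

Lemma dist_min (T : finType) (e : rel T) (e_conn : forall x y : T, connect e x y) x y n :
  walk_len e x y n -> dist e x y <= n.
Proof.
move=> Hn; case: (ltnP n #|T|) => [ltn|len]; last first.
  by apply: ltnW; apply: leq_trans len; case: (dist_spec e_conn x y).
rewrite leqNgt; apply/negP => lt; have := before_find 0 lt.
by rewrite nth_iota // add0n Hn.
Qed.
Lemma dist_refl (T : finType) (e : rel T) (e_conn : forall x y : T, connect e x y) x :
  dist e x x = 0.
Proof. by apply/eqP; rewrite -leqn0; apply: dist_min => //; rewrite walk0. Qed.

Lemma dist_eq0 (T : finType) (e : rel T) (e_conn : forall x y : T, connect e x y) x y :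
  dist e x y = 0 -> x = y.
Proof. by case: (dist_spec e_conn x y) => _ + H; rewrite H walk0 => /eqP. Qed.

Lemma dist_sym (T : finType) (e : rel T) (e_sym : symmetric e)
  (e_conn : forall x y : T, connect e x y) x y : dist e x y = dist e y x.
Proof.
apply/eqP; rewrite eqn_leq; apply/andP; split; apply: dist_min => //.
  by apply: walk_sym => //; exact: (proj2 (dist_spec e_conn y x)).
by apply: walk_sym => //; exact: (proj2 (dist_spec e_conn x y)).
Qed.

Lemma dist_tri (T : finType) (e : rel T) (e_conn : forall x y : T, connect e x y) x y z :
  dist e x z <= dist e x y + dist e y z.
Proof.
apply: dist_min => //; apply: (walk_cat (y:=y)).
  exact: (proj2 (dist_spec e_conn x y)).
exact: (proj2 (dist_spec e_conn y z)).
Qed.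

Lemma dist_edge (T : finType) (e : rel T) (e_irr : irreflexive e)
  (e_conn : forall x y : T, connect e x y) x y : e x y -> dist e x y = 1.
Proof.
move=> exy; apply/eqP; rewrite eqn_leq; apply/andP; split.
  by apply: dist_min => //; rewrite walk1.
rewrite lt0n; apply/eqP => /(dist_eq0 e_conn) Exy; by rewrite Exy e_irr in exy.
Qed.

Lemma dist1E (T : finType) (e : rel T) (e_conn : forall x y : T, connect e x y) x y :
  dist e x y = 1 -> e x y.
Proof. by case: (dist_spec e_conn x y) => _ + H; rewrite H walk1. Qed.

Lemma dist_next (T : finType) (e : rel T) (e_irr : irreflexive e)
  (e_conn : forall x y : T, connect e x y) x y z : e y z -> dist e x z <= dist e x y + 1.
Proof. by move=> eyz; rewrite -(dist_edge e_irr e_conn eyz) dist_tri. Qed.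

Lemma leaf_uniq (T : finType) (e : rel T) (e_sym : symmetric e) u x z :
  e u x -> deg e x = 1 -> e x z -> z = u.
Proof.
move=> eux /eqP/cards1P[w Hw] exz.
have : u \in [set z | e x z] by rewrite inE e_sym.
have : z \in [set z | e x z] by rewrite inE.
by rewrite Hw !inE => /eqP -> /eqP ->.
Qed.

Lemma dist_leaf (T : finType) (e : rel T) (e_sym : symmetric e) (e_irr : irreflexive e)
  (e_conn : forall x y : T, connect e x y) u x w :
  e u x -> deg e x = 1 -> w != x -> dist e w x = dist e w u + 1.
Proof.
move=> eux dx wx; apply/eqP; rewrite eqn_leq dist_next //=.
rewrite (dist_sym e_sym e_conn w x); case: (dist_spec e_conn x w) => _.
case E: (dist e x w) => [|k].
  by move/(dist_eq0 e_conn): E => E; rewrite E eqxx in wx.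
rewrite walkS => /existsP[z /andP[exz Hz]].
rewrite (leaf_uniq e_sym eux dx exz) in Hz.
by rewrite addn1 ltnS (dist_sym e_sym e_conn w u); apply: dist_min.
Qed.

Lemma res_ex (T : finType) (e : rel T) S x y : mld_set e S -> x != y ->
  exists2 w, w \in S & dist e w x != dist e w y.
Proof.
case/andP => /forallP /(_ x) /forallP /(_ y) /implyP H _ /H /existsP[w /andP[wS Hw]].
by exists w.
Qed.

Lemma dom_ex (T : finType) (e : rel T) S x : mld_set e S -> x \notin S ->
  exists2 w, w \in S & e x w.
Proof.
case/andP => _ /forallP /(_ x) /implyP H /H /existsP[w /andP[wS Hw]].
by exists w.
Qed.

Lemma no_tri (T : finType) (e : rel T) (e_irr : irreflexive e) (girth5 : girth_ge5 e) a b c :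
  e a b -> e b c -> e c a -> False.
Proof.
move=> eab ebc eca; apply: (girth5 3 isT); exists [:: a; b; c]; split => //=; last first.
  by rewrite eab ebc eca.
have ab : a != b by apply: contraTneq eab => ->; rewrite e_irr.
have bc : b != c by apply: contraTneq ebc => ->; rewrite e_irr.
have ac : a != c by apply: contraTneq eca => ->; rewrite e_irr.
by rewrite !inE !negb_or ab ac bc.
Qed.

Lemma no_cyc4 (T : finType) (e : rel T) (e_irr : irreflexive e) (girth5 : girth_ge5 e) a b c d :
  e a b -> e b c -> e c d -> e d a -> a != c -> b != d -> False.
Proof.
move=> eab ebc ecd eda ac bd; apply: (girth5 4 isT); exists [:: a; b; c; d]; split => //=; last first.
  by rewrite eab ebc ecd eda.
have ab : a != b by apply: contraTneq eab => ->; rewrite e_irr.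
have bc : b != c by apply: contraTneq ebc => ->; rewrite e_irr.
have cd : c != d by apply: contraTneq ecd => ->; rewrite e_irr.
have da : a != d by apply: contraTneq eda => ->; rewrite e_irr.
by rewrite !inE !negb_or ab ac da bc bd cd.
Qed.

Lemma part1 (T : finType) (e : rel T) (e_sym : symmetric e) (e_irr : irreflexive e)
  (e_conn : forall x y : T, connect e x y) (S : {set T}) (HS : mld_set e S) u x y :
  u \in S -> x \notin S -> y \notin S ->
  e u x -> e u y -> deg e x = 1 -> deg e y = 1 -> x = y.
Proof.
move=> uS xS yS eux euy dx dy; apply/eqP; apply: contraT => xy.
have [w wS] := res_ex HS xy.
have wx : w != x by apply: contraNneq xS => <-.
have wy : w != y by apply: contraNneq yS => <-.
by rewrite (dist_leaf e_sym e_irr e_conn eux dx wx) (dist_leaf e_sym e_irr e_conn euy dy wy) eqxx.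
Qed.

Lemma part2 (T : finType) (e : rel T)
  (e_sym : symmetric e) (e_irr : irreflexive e)
  (e_conn : forall x y : T, connect e x y)
  (girth5 : girth_ge5 e) (notP2 : ~ iso_P2 e)
  (S : {set T}) (HS : mld_set e S) (bar : T -> T)
  (Hbar : forall u, u \in S ->
        (bar u \notin S /\ e u (bar u) /\ deg e (bar u) = 1) \/
        ((forall x, x \notin S -> e u x -> deg e x <> 1) /\ bar u = u)) :
  doubly_resolving e (bar @: S) /\ #|bar @: S| = #|S|.
Proof.
have dS := dist_sym e_sym e_conn.
have d0 := dist_refl e_conn.
have dE := dist_edge e_irr e_conn.
have d0E := dist_eq0 e_conn.
have barS : forall v, v \in S -> bar v \in S -> bar v = v.
  move=> v vS; case: (Hbar v vS) => [[/negPf-> _]|[_ ->]] //.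
have barN : forall v, v \in S -> bar v \notin S -> e v (bar v) /\ deg e (bar v) = 1.
  move=> v vS; case: (Hbar v vS) => [[_ [H1 H2]] _|[_ E]]; first by [].
  by rewrite E vS.
have inj : {in S &, injective bar}.
  move=> u v uS vS E; case: (boolP (bar u \in S)) => bu.
    by rewrite -(barS u uS bu) -(barS v vS) // -E.
  have bv : bar v \notin S by rewrite -E.
  have [eu du] := barN u uS bu; have [ev _] := barN v vS bv.
  by apply: esym; apply: (leaf_uniq e_sym eu du); rewrite E e_sym.
split; last by rewrite card_in_imset.
pose C x y := forall w1 w2, w1 \in bar @: S -> w2 \in bar @: S ->
  dist e w1 x + dist e w2 y = dist e w2 x + dist e w1 y.
suff key : forall x y, x != y -> C x y -> False.
  apply/forallP => x; apply/forallP => y; apply/implyP => xy.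
  apply: contraT => Hn; exfalso; apply: (key x y xy) => w1 w2 h1 h2.
  have : ~~ doubly_resolves e w1 w2 x y.
    apply/negP => H; move/negP: Hn; apply; apply/existsP; exists w1; rewrite h1 /=.
    by apply/existsP; exists w2; rewrite h2.
  rewrite /doubly_resolves negbK => /eqP; lia.
have Csym : forall x y, C x y -> C y x.
  by move=> x y H w1 w2 h1 h2; have := H w2 w1 h2 h1; lia.
have xyS : forall x y, x != y -> C x y -> x \in bar @: S -> y \in bar @: S -> False.
  move=> x y xy H hx hy; have := H x y hx hy; rewrite !d0 (dS y x) => E.
  have : dist e x y = 0 by lia.
  by move/d0E => E'; rewrite E' eqxx in xy.
have transfer : forall x y v, v \in S -> (bar v = v \/ (bar v != x /\ bar v != y)) ->
    dist e (bar v) x + dist e v y = dist e v x + dist e (bar v) y.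
  move=> x y v vS Hv; case: (boolP (bar v \in S)) => bS.
    by rewrite (barS v vS bS).
  case: Hv => [E|[bx by']]; first by rewrite E vS in bS.
  have [ev dv] := barN v vS bS.
  rewrite (dS (bar v) x) (dS (bar v) y) (dist_leaf e_sym e_irr e_conn ev dv (w:=x)) 1?eq_sym //.
  rewrite (dist_leaf e_sym e_irr e_conn ev dv (w:=y)) 1?eq_sym // (dS v x) (dS v y); lia.
have caseB : forall x y u0, x != y -> C x y -> u0 \in S -> bar u0 = x -> x \notin S -> False.
  move=> x y u0 xy H u0S bx xS.
  have [eux dx] : e u0 x /\ deg e x = 1 by rewrite -bx; apply: barN; rewrite // bx.
  have xin : x \in bar @: S by rewrite -bx imset_f.
  have yout : y \notin bar @: S by apply/negP => hy; apply: (xyS x y).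
  have Lx : forall w, w != x -> dist e w x = dist e w u0 + 1.
    by move=> w; apply: dist_leaf.
  have xnb : forall z, e x z -> z = u0 by move=> z; apply: leaf_uniq eux dx.
  have bx' : forall v, v \in S -> bar v = x -> v = u0.
    by move=> v vS E; apply: inj; rewrite ?E.
  have u0x : u0 != x by apply: contraTneq eux => ->; rewrite e_irr.
  have dxu : dist e x u0 = 1 by apply: dE; rewrite e_sym.
  case: (eqVneq y u0) => [yu|yu].
    subst y.
    have Sin : forall v, v \in S -> v = u0.
      move=> v vS; apply: bx' => //; apply/eqP; apply: contraT => nb.
      have := H x (bar v) xin (imset_f _ vS).
      rewrite d0 (Lx _ nb) dxu; move=> E; exfalso; move: E; lia.
    apply: notP2; exists u0, x; split => // z.
    case: (eqVneq z u0) => [->|zu]; [by left|right].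
    have zS : z \notin S by apply: contra zu => /Sin ->.
    have [w wS ezw] := dom_ex HS zS; move: ezw; rewrite (Sin w wS) => ezu.
    apply/eqP; apply: contraT => zx.
    have [w' w'S] := res_ex HS zx; rewrite (Sin w' w'S) (dS u0 z) (dE _ _ ezu).
    by rewrite (dS u0 x) dxu.
  have yS : y \notin S.
    apply/negP => yS.
    have byy : bar y != y by apply: contraNneq yout => <-; exact: imset_f.
    have byS : bar y \notin S by apply: contra byy => h; apply/eqP; apply: barS.
    have [eyb db] := barN y yS byS.
    have bxn : bar y != x by apply/eqP => E; move: yu; rewrite (bx' y yS E) eqxx.
    have := H x (bar y) xin (imset_f _ yS).
    rewrite d0 (dS (bar y) y) (dE _ _ eyb) (dS (bar y) x).
    rewrite (dist_leaf e_sym e_irr e_conn eyb db (w:=x)) 1?eq_sym // => E.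
    have : dist e x y = 0 by clear -E; lia.
    by move/d0E => E'; rewrite E' eqxx in xy.
  have onlyu0 : forall b, b \in S -> e y b -> b = u0.
    move=> b bS eyb; apply/eqP; apply: contraT => bu.
    have b1 : bar b != x by apply/eqP => /(bx' b bS) E; rewrite E eqxx in bu.
    have b2 : bar b != y by apply: contraNneq yout => <-; exact: imset_f.
    have T1 := transfer x y b bS (or_intror (conj b1 b2)).
    have := H x (bar b) xin (imset_f _ bS); rewrite d0.
    have tri := dist_tri e_conn x b y.
    rewrite (dS b y) (dE _ _ eyb) (dS x b) in T1 tri * => E.
    have nz : dist e x y != 0 by apply/eqP => /d0E E'; rewrite E' eqxx in xy.
    have : dist e x y = 1 by clear -T1 tri E nz; lia.
    move/(dist1E e_conn)/xnb => E'; by rewrite E' eqxx in yu.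
  have [b bS eyb] := dom_ex HS yS.
  have eyu : e y u0 by rewrite -(onlyu0 b bS eyb).
  have ndeg : deg e y != 1.
    apply/eqP => dy; have euy : e u0 y by rewrite e_sym.
    by rewrite (part1 e_sym e_irr e_conn HS u0S xS yS eux euy dx dy) eqxx in xy.
  have [z eyz zu] : exists2 z, e y z & z != u0.
    case: (pickP [pred z | e y z && (z != u0)]) => [z /andP[? ?]|none]; first by exists z.
    exfalso; move/eqP: ndeg; apply; apply/eqP/cards1P; exists u0; apply/setP => z; rewrite !inE.
    case: (eqVneq z u0) => [->|zu0]; first by rewrite eyu.
    by have := none z; rewrite /= zu0 andbT => ->.
  have zS : z \notin S by apply: contra zu => zS; apply/eqP; apply: onlyu0.
  have [w wS ezw] := dom_ex HS zS.
  have wu : w != u0.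
    apply/eqP => E; subst w; apply: (no_tri e_irr girth5 eyz ezw); by rewrite e_sym.
  have b1 : bar w != x by apply/eqP => /(bx' w wS) E; rewrite E eqxx in wu.
  have b2 : bar w != y by apply: contraNneq yout => <-; exact: imset_f.
  have T1 := transfer x y w wS (or_intror (conj b1 b2)).
  have := H x (bar w) xin (imset_f _ wS); rewrite d0 => E.
  have dxy : dist e x y = 2.
    by rewrite dS Lx 1?eq_sym // dE // e_sym.
  have tri := dist_tri e_conn w z y.
  have ewz : e w z by rewrite e_sym.
  rewrite (dE _ _ ewz) (dS z y) (dE _ _ eyz) in tri.
  have : dist e w x = 0 by clear -T1 E tri dxy; lia.
  by move/d0E => E'; rewrite -E' wS in xS.
have caseA2 : forall x y, x != y ->
    (forall v1 v2, v1 \in S -> v2 \in S -> dist e v1 x + dist e v2 y = dist e v2 x + dist e v1 y) ->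
    (forall v, v \in S -> bar v = v \/ (bar v != x /\ bar v != y)) ->
    x \in S -> y \notin S -> False.
  move=> x y xy CS cA xS yS.
  have nz : dist e x y != 0 by apply/eqP => /d0E E'; rewrite E' eqxx in xy.
  have onlyx : forall b, b \in S -> e y b -> b = x.
    move=> b bS eyb; have := CS x b xS bS; rewrite d0 (dS b y) (dE _ _ eyb) => E.
    have : dist e b x = 0 by clear -E nz; lia.
    by move/d0E.
  have [b bS eyb] := dom_ex HS yS.
  have exy : e x y by rewrite -(onlyx b bS eyb) e_sym.
  have ndeg : deg e y != 1.
    apply/eqP => dy.
    case: (Hbar x xS) => [[bS' [eb db]]|[Hn _]]; last exact: (Hn y yS exy dy).
    have Eb := part1 e_sym e_irr e_conn HS xS bS' yS eb exy db dy.
    case: (cA x xS) => [E|[_ hb]]; first by rewrite E xS in bS'.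
    by rewrite Eb eqxx in hb.
  have [z eyz zx] : exists2 z, e y z & z != x.
    case: (pickP [pred z | e y z && (z != x)]) => [z /andP[? ?]|none]; first by exists z.
    exfalso; move/eqP: ndeg; apply; apply/eqP/cards1P; exists x; apply/setP => z; rewrite !inE.
    case: (eqVneq z x) => [->|zx0]; first by rewrite e_sym.
    by have := none z; rewrite /= zx0 andbT => ->.
  have zS : z \notin S by apply: contra zx => zS; apply/eqP; apply: onlyx.
  have [w wS ezw] := dom_ex HS zS.
  have wx : w != x.
    apply/eqP => E; subst w; exact: (no_tri e_irr girth5 exy eyz ezw).
  have := CS x w xS wS; rewrite d0 (dE _ _ exy) => E.
  have tri := dist_tri e_conn w z y.
  have ewz : e w z by rewrite e_sym.
  rewrite (dE _ _ ewz) (dS z y) (dE _ _ eyz) in tri.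
  have wy0 : dist e w y != 0.
    by apply/eqP => /d0E E'; rewrite -E' wS in yS.
  have wy1 : dist e w y != 1.
    apply/eqP => /(dist1E e_conn) ewy.
    have : w = x by apply: onlyx; rewrite // e_sym.
    by move/eqP; rewrite (negbTE wx).
  have : dist e w x = 1 by clear -E tri wy0 wy1; lia.
  move/(dist1E e_conn) => ewx.
  apply: (no_cyc4 e_irr girth5 ewx exy eyz (_ : e z w)); first by rewrite e_sym.
    by apply/eqP => E'; rewrite -E' wS in yS.
  by rewrite eq_sym.
move=> x y xy H.
case: (boolP [exists u0 in S, (bar u0 == x) && (x \notin S)]) =>
    [/existsP[u0 /and3P[u0S /eqP bx xS]]|nx].
  exact: (caseB x y u0 xy H u0S bx xS).
case: (boolP [exists u0 in S, (bar u0 == y) && (y \notin S)]) =>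
    [/existsP[u0 /and3P[u0S /eqP bx xS]]|ny].
  by apply: (caseB y x u0 _ (Csym _ _ H) u0S bx xS); rewrite eq_sym.
have cA : forall v, v \in S -> bar v = v \/ (bar v != x /\ bar v != y).
  move=> v vS; case: (boolP (bar v \in S)) => bS; first by left; exact: barS.
  right; split; apply/eqP => E.
    by move/negP: nx; apply; apply/existsP; exists v; rewrite vS E eqxx /= -E.
  by move/negP: ny; apply; apply/existsP; exists v; rewrite vS E eqxx /= -E.
have CS : forall v1 v2, v1 \in S -> v2 \in S ->
    dist e v1 x + dist e v2 y = dist e v2 x + dist e v1 y.
  move=> v1 v2 h1 h2; have := H _ _ (imset_f bar h1) (imset_f bar h2).
  have := transfer x y v1 h1 (cA v1 h1); have := transfer x y v2 h2 (cA v2 h2).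
  move=> t2 t1 hh; clear -t1 t2 hh; lia.
have nz : dist e x y != 0 by apply/eqP => /d0E E'; rewrite E' eqxx in xy.
have [w0 w0S w0n] := res_ex HS xy.
case: (boolP (x \in S)) => xS; case: (boolP (y \in S)) => yS.
- have := CS x y xS yS; rewrite !d0 (dS y x) => E.
  have : dist e x y = 0 by clear -E; lia.
  by move/eqP; rewrite (negbTE nz).
- exact: (caseA2 x y xy CS cA xS yS).
- apply: (caseA2 y x _ _ _ yS xS); first by rewrite eq_sym.
    by move=> v1 v2 h1 h2; have := CS v2 v1 h2 h1; clear; lia.
  by move=> v vS; case: (cA v vS) => [->|[? ?]]; [left|right].
- have [a aS exa] := dom_ex HS xS.
  have [b bS eyb] := dom_ex HS yS.
  have := CS a b aS bS; rewrite (dS a x) (dE _ _ exa) (dS b y) (dE _ _ eyb) => E1.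
  have := CS a w0 aS w0S; rewrite (dS a x) (dE _ _ exa) => E2.
  have ay : dist e a y != 0 by apply/eqP => /d0E E'; rewrite -E' aS in yS.
  have bx : dist e b x != 0 by apply/eqP => /d0E E'; rewrite -E' bS in xS.
  move/eqP: w0n => w0n.
  clear -E1 E2 ay bx w0n; lia.
Qed.

Theorem proposition10 (T : finType) (e : rel T)
  (e_sym : symmetric e) (e_irr : irreflexive e)
  (e_conn : forall x y : T, connect e x y) (card_T : 2 <= #|T|)
  (girth5 : girth_ge5 e) (notP2 : ~ iso_P2 e)
  (S : {set T}) (HS : mld_set e S) :
  (forall u x y : T, u \in S -> x \notin S -> y \notin S ->
     e u x -> e u y -> deg e x = 1 -> deg e y = 1 -> x = y) /\
  (forall bar : T -> T,
     (forall u, u \in S ->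
        (bar u \notin S /\ e u (bar u) /\ deg e (bar u) = 1) \/
        ((forall x, x \notin S -> e u x -> deg e x <> 1) /\ bar u = u)) ->
     doubly_resolving e (bar @: S) /\ #|bar @: S| = #|S|) /\
  psi e <= gamma_M e.
Proof.
split; first by move=> u x y; apply: part1.
split; first by move=> bar Hbar; apply: part2.
have d0 := dist_refl e_conn.
have d0E := dist_eq0 e_conn.
rewrite /psi /gamma_M.
case: arg_minnP => [|D HD minD].
  rewrite /doubly_resolving; apply/forallP => x; apply/forallP => y; apply/implyP => xy.
  apply/existsP; exists x; rewrite in_setT /=; apply/existsP; exists y; rewrite in_setT /=.
  rewrite /doubly_resolves !d0 (dist_sym e_sym e_conn y x).
  have nz : dist e x y != 0 by apply/eqP => /d0E E; rewrite E eqxx in xy.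
  move: nz; clear; lia.
case: arg_minnP => [|S0 HS0 minS0].
  rewrite /mld_set /resolving /dominating. apply/andP; split; last by apply/forallP => x; rewrite in_setT.
  apply/forallP => x; apply/forallP => y; apply/implyP => xy.
  apply/existsP; exists x; rewrite in_setT d0 /= eq_sym.
  by apply/eqP => /d0E E; rewrite E eqxx in xy.
pose bar u := if [pick z | (z \notin S0) && e u z && (deg e z == 1)] is Some z then z else u.
have Hbar : forall u, u \in S0 ->
        (bar u \notin S0 /\ e u (bar u) /\ deg e (bar u) = 1) \/
        ((forall x, x \notin S0 -> e u x -> deg e x <> 1) /\ bar u = u).
  move=> u uS; rewrite /bar; case: pickP => [z /andP[/andP[zS euz] /eqP dz]|none].
    by left.
  right; split => // x xS eux dx; have := none x; by rewrite /= xS eux dx eqxx.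
have [DR card] := part2 e_sym e_irr e_conn girth5 notP2 HS0 Hbar.
by rewrite -card; apply: minD.
Qed.
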